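(* Let $R$ be a ranking profile over $m$ candidates and $\rhd$ the ranking chosen by the Proportional Sequential Borda rule for $R$. Then for every subprofile $S$ of $R$ with $|S|>0$, $$\frac{1}{|S|}\sum_{\succ\in\mathcal{R}}S(\succ)\,u(\succ,\rhd)\geq\binom{m}{2}\frac{|S|}{4}-\frac{3}{16}.$$
   Context: Let $C$ be a set of $m$ candidates. A ranking is a strict linear order over $C$; $\mathcal{R}$ denotes the set of all rankings over $C$. A ranking profile is a function $R:\mathcal{R}\to[0,1]$ with $\sum_{\succ}R(\succ)=1$. A subprofile of $R$ is a function $S:\mathcal{R}\to[0,1]$ with $S(\succ)\leq R(\succ)$ for all $\succ$; $|S|=\sum_{\succ}S(\succ)$. For rankings $\succ,\rhd$, $u(\succ,\rhd)=|\{(x,y)\in C^2: x\succ y\text{ and }x\rhd y\}|$; for $x\in X\subseteq C$, $u(\succ,x,X)=|\{y\in X\setminus\{x\}: x\succ y\}|$; for $b:\mathcal{R}\to\mathbb{R}_{\geq0}$, $U(b,x,X)=\sum_{\succ}b(\succ)u(\succ,x,X)$. Proportional Sequential Borda rule: set $X_1=C$, $b_1(\succ)=R(\succ)\binom{m}{2}$. For $i=1,\dots,m$: choose $x^*\in\arg\max_{x\in X_i}U(b_i,x,X_i)$ (ties broken arbitrarily), place $x^*$ at position $i$, set $X_{i+1}=X_i\setminus\{x^*\}$ and $b_{i+1}(\succ)=b_i(\succ)-\min\!\big(\frac{(m-i)u(\succ,x^*,X_i)b_i(\succ)}{U(b_i,x^*,X_i)},b_i(\succ)\big)$ (convention $0/0=0$).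 *)

(* Defs.v *)
From HB Require Import structures.
From mathcomp Require Import all_boot all_order all_algebra all_fingroup.
From mathcomp Require Import reals.
Set Implicit Arguments. Unset Strict Implicit. Unset Printing Implicit Defensive.
Import Order.TTheory GRing.Theory Num.Theory.
Local Open Scope ring_scope.

(* Candidates: C = 'I_m.  A ranking is a strict linear order on C, encoded by
   the bijection s : {perm 'I_m} mapping each candidate to its position
   (0 = top).  x is ranked above y in s iff s x < s y. *)
Definition prefers (m : nat) (s : {perm 'I_m}) (x y : 'I_m) : bool :=
  (s x < s y)%N.

Definition u_rank (m : nat) (s t : {perm 'I_m}) : nat :=
  #|[set p : 'I_m * 'I_m | prefers s p.1 p.2 && prefers t p.1 p.2]|.

Definition u_cand (m : nat) (s : {perm 'I_m}) (x : 'I_m) (X : {set 'I_m}) : nat :=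
  #|[set y in X | (y != x) && prefers s x y]|.

Definition U_score (R : realType) (m : nat) (b : {ffun {perm 'I_m} -> R})
  (x : 'I_m) (X : {set 'I_m}) : R :=
  \sum_(s : {perm 'I_m}) b s * (u_cand s x X)%:R.

(* Remaining candidates before step k (0-indexed): those placed at
   position >= k by the output ranking rhd. *)
Definition remaining (m : nat) (rhd : {perm 'I_m}) (k : nat) : {set 'I_m} :=
  [set x | (k <= rhd x)%N].

(* One budget update step (0-indexed step k, i.e. paper's step i = k+1, so
   the factor m - i is m - k - 1).  Division by 0 is 0 in MathComp. *)
Definition budget_step (R : realType) (m : nat) (k : nat)
  (b : {ffun {perm 'I_m} -> R}) (x : 'I_m) (X : {set 'I_m})
  : {ffun {perm 'I_m} -> R} :=
  [ffun s => b s - Num.min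
      ((m - k.+1)%:R * (u_cand s x X)%:R * b s / U_score b x X) (b s)].

(* Budgets b_k along the run of the rule which selects, at step k, the
   candidate placed at position k by rhd. *)
Fixpoint budget (R : realType) (m : nat) (Rp : {ffun {perm 'I_m} -> R})
  (rhd : {perm 'I_m}) (k : nat) : {ffun {perm 'I_m} -> R} :=
  match k with
  | 0 => [ffun s => Rp s * ('C(m, 2))%:R]
  | k'.+1 =>
      let b := budget Rp rhd k' in
      match [pick x | (rhd x == k' :> nat)] with
      | Some x => budget_step k' b x (remaining rhd k')
      | None => b
      end
  end.

(* rhd is a possible output of the Proportional Sequential Borda rule on Rp
   (for some tie-breaking): the candidate x placed at position k = rhd x
   maximizes U(b_k, ., X_k) over X_k. *)
Definition PSB_outcome (R : realType) (m : nat) (Rp : {ffun {perm 'I_m} -> R})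
  (rhd : {perm 'I_m}) : Prop :=
  forall x y : 'I_m,
    let k := nat_of_ord (rhd x) in
    y \in remaining rhd k ->
    U_score (budget Rp rhd k) y (remaining rhd k)
      <= U_score (budget Rp rhd k) x (remaining rhd k).

Definition is_profile (R : realType) (m : nat) (Rp : {ffun {perm 'I_m} -> R}) : Prop :=
  (forall s, 0 <= Rp s <= 1) /\ \sum_s Rp s = 1.

Definition is_subprofile (R : realType) (m : nat) (Rp S : {ffun {perm 'I_m} -> R}) : Prop :=
  forall s, 0 <= S s <= Rp s.

Definition mass (R : realType) (m : nat) (S : {ffun {perm 'I_m} -> R}) : R :=
  \sum_s S s.

(* Main.v *)
Require Import Defs.
From HB Require Import structures.
From mathcomp Require Import all_boot all_order all_algebra all_fingroup.
From mathcomp Require Import reals.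
From mathcomp Require Import ring lra zify.
Import Order.TTheory GRing.Theory Num.Theory.
Local Open Scope ring_scope.
Set Implicit Arguments. Unset Strict Implicit.

Lemma card_setP (T : finType) (X : {set T}) (P : pred T) :
  #|[set z in X | P z]| = (\sum_(z in X) (P z : nat))%N.
Proof.
rewrite -sum1_card big_mkcond /= [RHS]big_mkcond /=.
apply: eq_bigr => z _; rewrite in_set; by case: (z \in X); case: (P z).
Qed.

Lemma sum_ucand (m : nat) (s : {perm 'I_m}) (X : {set 'I_m}) :
  ((\sum_(y in X) u_cand s y X) * 2 = #|X| * (#|X|).-1)%N.
Proof.
have H : forall y, u_cand s y X = (\sum_(z in X) ((z != y) && prefers s y z : nat))%N.
  by move=> y; rewrite /u_cand card_setP.
under eq_bigr do rewrite H.
set S := (\sum_(y in X) _)%N.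
have E : (S + S = #|X| * (#|X|).-1)%N.
  rewrite {2}/S exchange_big /S -big_split /=.
  rewrite -sum_nat_const. apply: eq_bigr => y Hy.
  rewrite -big_split /=.
  rewrite (bigD1 y Hy) /= eqxx /= add0n.
  have -> : (#|X|).-1 = #|X :\ y| by rewrite (cardsD1 y X) Hy.
  rewrite -sum1_card. apply: eq_big => z; first by rewrite !inE andbC.
  move=> /andP[_ Hzy]; rewrite Hzy eq_sym Hzy /prefers /=.
  have : s z != s y by rewrite (inj_eq perm_inj).
  case: ltngtP => // /val_inj ->; by rewrite eqxx.
lia.
Qed.

Lemma avg_lemma (R : realType) (m : nat) (b w : {perm 'I_m} -> R)
  (bf : {ffun {perm 'I_m} -> R}) (x : 'I_m) (X : {set 'I_m}) (j : nat) :
  (forall s, bf s = b s) ->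
  (forall s, 0 <= b s) -> (forall s, 0 <= w s <= 1) ->
  #|X| = j.+1 ->
  (forall y, y \in X -> U_score bf y X <= U_score bf x X) ->
  (\sum_s w s * b s) * j%:R <= 2 * U_score bf x X.
Proof.
move=> Eb b0 w01 cX Hmax.
set U := U_score bf x X.
have H1 : \sum_(y in X) \sum_s w s * b s * (u_cand s y X)%:R <= #|X|%:R * U.
  rewrite mulr_natl -sumr_const; apply: ler_sum => y Hy.
  apply: le_trans (Hmax y Hy); rewrite /U_score; apply: ler_sum => s _.
  rewrite Eb ler_wpM2r // ?ler0n //.
  have /andP[w0 w1] := w01 s.
  by rewrite ler_piMl.
have H2 : \sum_(y in X) \sum_s w s * b s * (u_cand s y X)%:R
   = (\sum_s w s * b s) * (j.+1 * j)%:R / 2.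
  rewrite exchange_big /= mulr_suml mulr_suml; apply: eq_bigr => s _.
  rewrite -mulr_sumr -natr_sum.
  have := sum_ucand s X; rewrite cX /= => E.
  by rewrite -E natrM mulrA mulfK // pnatr_eq0.
have U0 : 0 <= U.
  rewrite /U /U_score; apply: sumr_ge0 => s _; rewrite Eb mulr_ge0 ?ler0n //.
move: H1; rewrite H2 cX natrM => H.
have Hj : (0:R) < j.+1%:R by rewrite ltr0n.
set W := \sum_s _ in H *.
set J := j%:R in H *.
set J1 := j.+1%:R in H Hj *.
nra.
Qed.

Lemma ucand_le (m : nat) (s : {perm 'I_m}) (x : 'I_m) (X : {set 'I_m}) :
  x \in X -> (u_cand s x X <= #|X|.-1)%N.
Proof.
move=> Hx; rewrite /u_cand (cardsD1 x X) Hx /=.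
apply: subset_leq_card; apply/subsetP => y; rewrite !inE.
by case/andP=> -> /andP[-> _].
Qed.

Lemma U_ge0 (R : realType) (m : nat) (b : {ffun {perm 'I_m} -> R}) x X :
  (forall s, 0 <= b s) -> 0 <= U_score b x X.
Proof. by move=> b0; apply: sumr_ge0 => s _; rewrite mulr_ge0 ?ler0n. Qed.

Lemma step_val (R : realType) (m k : nat) (b : {ffun {perm 'I_m} -> R}) x X s :
  budget_step k b x X s =
  b s - Num.min ((m - k.+1)%:R * (u_cand s x X)%:R * b s / U_score b x X) (b s).
Proof. by rewrite /budget_step ffunE. Qed.

Lemma step_bounds (R : realType) (m k : nat) (b : {ffun {perm 'I_m} -> R}) x X s :
  (forall s, 0 <= b s) -> 0 <= budget_step k b x X s <= b s.
Proof.
move=> b0; rewrite step_val.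
have U0 := U_ge0 x X b0.
have h : 0 <= (m - k.+1)%:R * (u_cand s x X)%:R * b s / U_score b x X.
  by rewrite divr_ge0 // !mulr_ge0 ?ler0n.
apply/andP; split.
  by rewrite subr_ge0 ge_min lexx orbT.
by rewrite lerBlDr lerDl le_min h b0.
Qed.

Lemma payment (R : realType) (m k : nat) (b : {ffun {perm 'I_m} -> R}) (x : 'I_m) (X : {set 'I_m}) :
  (forall s, 0 <= b s) -> x \in X -> #|X| = (m - k.+1).+1 ->
  (forall y, y \in X -> U_score b y X <= U_score b x X) ->
  \sum_s budget_step k b x X s <=
    \sum_s b s - Num.min (m - k.+1)%:R ((\sum_s b s) / 2).
Proof.
move=> b0 Hx cX Hmax.
set j := (m - k.+1)%N in cX *.
set U := U_score b x X.
set B := \sum_s b s.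
have U0 : 0 <= U by exact: U_ge0.
have B0 : 0 <= B by apply: sumr_ge0.
have HA : B * j%:R <= 2 * U.
  have := @avg_lemma R m b (fun _ => 1) b x X j (fun _ => erefl) b0.
  rewrite /= => /(_ (fun _ => ltac:(by rewrite ler01 lexx))) /(_ cX Hmax).
  by under eq_bigr do rewrite mul1r.
set P := \sum_s Num.min (j%:R * (u_cand s x X)%:R * b s / U) (b s).
have EP : \sum_s budget_step k b x X s = B - P.
  rewrite /B /P -sumrB; apply: eq_bigr => s _; by rewrite step_val.
rewrite EP lerD2l lerN2.
case: (posnP j) => [j0|jpos].
  rewrite j0 ge_min; apply/orP; left; apply: sumr_ge0 => s _.
  by rewrite le_min b0 andbT divr_ge0 // !mulr_ge0 ?ler0n.
have Jp : (0:R) < j%:R by rewrite ltr0n.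
set c := Num.min (j%:R / U) (j%:R^-1).
have c0 : 0 <= c by rewrite le_min divr_ge0 ?ler0n ?invr_ge0 ?ler0n.
have HP : U * c <= P.
  rewrite /U /U_score mulr_suml; apply: ler_sum => s _.
  have us := ucand_le s Hx; rewrite cX /= in us.
  have us' : (u_cand s x X)%:R <= j%:R :> R by rewrite ler_nat.
  rewrite le_min; apply/andP; split.
    have -> : j%:R * (u_cand s x X)%:R * b s / U = b s * (u_cand s x X)%:R * (j%:R / U) by ring.
    by rewrite ler_wpM2l ?mulr_ge0 ?ler0n // ge_min lexx.
  have h1 : c <= j%:R^-1 by rewrite ge_min lexx orbT.
  have h2 : (u_cand s x X)%:R * c <= 1.
    apply: le_trans (_ : j%:R * j%:R^-1 <= 1).
      by apply: ler_pM => //; rewrite ler0n.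
    by rewrite mulfV ?gt_eqF.
  have := b0 s; nra.
apply: le_trans HP.
case: (eqVneq U 0) => [Ueq|Une].
  rewrite Ueq mul0r ge_min; apply/orP; right.
  have : B * j%:R <= 0 by move: HA; rewrite Ueq mulr0.
  nra.
have Upos : 0 < U by rewrite lt_def Une U0.
rewrite /c minr_pMr // mulrCA mulfV // mulr1.
rewrite le_min ge_min lexx /= ge_min; apply/orP; right.
rewrite ler_pdivlMr //.
nra.
Qed.

Lemma wdecrease (R : realType) (m k : nat) (b : {ffun {perm 'I_m} -> R})
  (w S : {perm 'I_m} -> R) (C : R) (x : 'I_m) (X : {set 'I_m}) :
  (forall s, 0 <= b s) -> (forall s, 0 <= w s <= 1) ->
  (forall s, w s * b s <= S s * C) -> 0 <= C -> (forall s, 0 <= S s) ->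
  #|X| = (m - k.+1).+1 ->
  (forall y, y \in X -> U_score b y X <= U_score b x X) ->
  (\sum_s w s * b s) * ((\sum_s w s * b s) - \sum_s w s * budget_step k b x X s)
   <= 2 * C * \sum_s S s * (u_cand s x X)%:R.
Proof.
move=> b0 w01 wS C0 S0 cX Hmax.
set j := (m - k.+1)%N in cX *.
set U := U_score b x X.
set W := \sum_s w s * b s.
set G := \sum_s S s * (u_cand s x X)%:R.
have U0 : 0 <= U by exact: U_ge0.
have W0 : 0 <= W by apply: sumr_ge0 => s _; have /andP[? _] := w01 s; rewrite mulr_ge0.
have G0 : 0 <= G by apply: sumr_ge0 => s _; rewrite mulr_ge0 ?ler0n.
have HA : W * j%:R <= 2 * U.
  exact: (@avg_lemma R m b w b x X j (fun _ => erefl) b0 w01 cX Hmax).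
have HD : W - \sum_s w s * budget_step k b x X s <= (j%:R / U) * (C * G).
  rewrite -sumrB /G mulr_sumr mulr_sumr; apply: ler_sum => s _.
  rewrite step_val mulrBr opprB addrC subrK.
  have /andP[w0 w1] := w01 s.
  apply: le_trans (_ : w s * (j%:R * (u_cand s x X)%:R * b s / U) <= _).
    by rewrite ler_wpM2l // ge_min lexx.
  have -> : w s * (j%:R * (u_cand s x X)%:R * b s / U)
     = (j%:R / U) * ((w s * b s) * (u_cand s x X)%:R) by ring.
  have jU : 0 <= j%:R / U by rewrite divr_ge0 ?ler0n.
  rewrite ler_wpM2l //.
  have -> : C * (S s * (u_cand s x X)%:R) = (S s * C) * (u_cand s x X)%:R by ring.
  by rewrite ler_wpM2r ?ler0n.
have HD' : W * (W - \sum_s w s * budget_step k b x X s) <= W * ((j%:R / U) * (C * G)).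
  by rewrite ler_wpM2l.
apply: le_trans HD' _.
case: (eqVneq U 0) => [Ueq|Une].
  by rewrite Ueq invr0 !mulr0 mul0r mulr0 !mulr_ge0 // ler0n.
have Upos : 0 < U by rewrite lt_def Une U0.
have -> : W * (j%:R / U * (C * G)) = (W * j%:R) / U * (C * G) by ring.
have -> : 2 * C * G = (2 * U) / U * (C * G) by field; rewrite Une.
by rewrite ler_wpM2r ?mulr_ge0 // ler_wpM2r // ?invr_ge0 ?ltW.
Qed.

Lemma budget_succ (R : realType) (m : nat) (Rp : {ffun {perm 'I_m} -> R})
  (rhd : {perm 'I_m}) (x : 'I_m) :
  budget Rp rhd (rhd x).+1 =
  budget_step (rhd x) (budget Rp rhd (rhd x)) x (remaining rhd (rhd x)).
Proof.
rewrite /=; case: pickP => [y /eqP Hy|H].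
  have -> : y = x by apply: (@perm_inj _ rhd); apply: val_inj; exact: Hy.
  done.
by have := H x; rewrite eqxx.
Qed.

Lemma budget_bounds (R : realType) (m : nat) (Rp : {ffun {perm 'I_m} -> R})
  (rhd : {perm 'I_m}) :
  (forall s, 0 <= Rp s) ->
  forall k s, 0 <= budget Rp rhd k s <= Rp s * ('C(m, 2%N))%:R.
Proof.
move=> R0; elim=> [|k IH] s /=.
  by rewrite ffunE lexx andbT mulr_ge0 ?ler0n.
case: pickP => [x _|_]; last exact: IH.
have b0 : forall s, 0 <= budget Rp rhd k s by move=> s'; case/andP: (IH s').
have /andP[h1 h2] := step_bounds k x (remaining rhd k) s b0.
by rewrite h1 /=; apply: le_trans h2 _; case/andP: (IH s).
Qed.

Lemma card_setT' (T : finType) (P : pred T) :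
  #|[set z | P z]| = (\sum_z (P z : nat))%N.
Proof.
rewrite -sum1_card big_mkcond /=.
apply: eq_bigr => z _; rewrite inE; by case: (P z).
Qed.

Lemma card_remaining (m : nat) (rhd : {perm 'I_m}) (k : nat) :
  #|remaining rhd k| = (m - k)%N.
Proof.
rewrite /remaining card_setT' (reindex_inj (@perm_inj _ rhd^-1)) /=.
under eq_bigr do rewrite permKV.
rewrite -(big_mkord xpredT (fun i => (k <= i : nat)%N)).
elim: m {rhd} => [|n IH]; first by rewrite big_geq.
rewrite big_nat_recr //= IH.
case: (leqP k n) => H /=; lia.
Qed.

Lemma urank_split (m : nat) (s rhd : {perm 'I_m}) :
  u_rank s rhd = (\sum_x u_cand s x (remaining rhd (rhd x)))%N.
Proof.
rewrite /u_rank card_setT' -(pair_big xpredT xpredT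
  (fun x y => (prefers s x y && prefers rhd x y : nat))) /=.
apply: eq_bigr => x _.
rewrite /u_cand card_setP [RHS]big_mkcond /=.
apply: eq_bigr => y _; rewrite !inE /prefers.
case: (eqVneq y x) => [->|Hyx]; first by rewrite ltnn andbF; case: ifP.
have Hr : (rhd x : nat) != rhd y.
  by apply/negP => /eqP/val_inj/perm_inj E; rewrite E eqxx in Hyx.
case: (ltngtP (rhd x) (rhd y)) => H.
- by rewrite /= ?andbT ?andbF.
- by rewrite /= ?andbT ?andbF.
- by rewrite H eqxx in Hr.
Qed.

Definition bnd (R : realType) (n : nat) : R :=
  if (3 <= n)%N then (n * n.-1)%:R / 2 else if n == 2%N then 3 / 2 else 3 / 4.

Lemma bnd_step (R : realType) (j : nat) (B : R) :
  0 <= B -> B <= bnd R j.+1 -> B - Num.min j%:R (B / 2) <= bnd R j.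
Proof.
move=> B0 HB.
rewrite lerBlDl -lerBlDr le_min; apply/andP.
move: HB; rewrite /bnd.
case: j => [|[|[|n]]] /=.
+ move=> HB; split; lra.
+ move=> HB; split; lra.
+ move=> HB; split; lra.
+ rewrite !natrM -!natr1 => HB.
  have n0 : (0:R) <= n%:R by rewrite ler0n.
  set N := n%:R in HB n0 *.
  have e1 : (N + 1 + 1 + 1 + 1) * (N + 1 + 1 + 1) / (0 + 1 + 1) = N * N / 2 + 7 / 2 * N + 6.
    by field.
  have e2 : (N + 1 + 1 + 1) * (N + 1 + 1) / (0 + 1 + 1) = N * N / 2 + 5 / 2 * N + 3.
    by field.
  rewrite e1 in HB; rewrite e2.
  have e3 : (0 + 1 + 1 : R) = 2 by rewrite add0r.
  rewrite e3.
  have : 0 <= N * N by rewrite mulr_ge0.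
  split; lra.
Qed.

Lemma bin2_mul2 (n : nat) : ('C(n, 2%N) * 2 = n * n.-1)%N.
Proof.
elim: n => [|n IH]; first by [].
rewrite binS bin1 mulnDl IH /=; case: n {IH} => [|n] /=; lia.
Qed.

Lemma binR (R : realType) (n : nat) : ('C(n, 2%N))%:R = (n * n.-1)%:R / 2 :> R.
Proof. by rewrite -bin2_mul2 natrM mulfK // pnatr_eq0. Qed.

Lemma budget_final (R : realType) (m : nat) (Rp : {ffun {perm 'I_m} -> R})
  (rhd : {perm 'I_m}) :
  is_profile Rp -> PSB_outcome Rp rhd ->
  \sum_s budget Rp rhd m s <= 3 / 4.
Proof.
move=> [R01 Rsum] Hpsb.
have R0 : forall s, 0 <= Rp s by move=> s; case/andP: (R01 s).
have b0 : forall k s, 0 <= budget Rp rhd k s.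
  by move=> k s; case/andP: (budget_bounds rhd R0 k s).
suff H : forall k, (k <= m)%N -> \sum_s budget Rp rhd k s <= bnd R (m - k).
  by have := H m (leqnn m); rewrite subnn /bnd.
elim=> [|k IH] Hk.
  rewrite /= subn0.
  under eq_bigr do rewrite ffunE.
  rewrite -mulr_suml Rsum mul1r binR /bnd.
  case: m {Rp rhd R01 Rsum Hpsb R0 b0 Hk} => [|[|[|n]]] /=.
  - rewrite ?muln0 ?muln1 ?mul0n ?mul1n ?mul0r; lra.
  - rewrite ?muln0 ?muln1 ?mul0n ?mul1n ?mul0r; lra.
  - rewrite ?muln0 ?muln1 ?mul0n ?mul1n ?mul0r; lra.
  - by [].
have km : (k < m)%N by [].
set x := (rhd^-1)%g (Ordinal km).
have Hx : rhd x = k :> nat by rewrite /x permKV.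
have := budget_succ Rp rhd x; rewrite Hx => ->.
have cX : #|remaining rhd k| = (m - k.+1).+1 by rewrite card_remaining; lia.
have Hmax : forall y, y \in remaining rhd k ->
   U_score (budget Rp rhd k) y (remaining rhd k) <=
   U_score (budget Rp rhd k) x (remaining rhd k).
  by move=> y Hy; have := Hpsb x y; rewrite Hx; apply.
have Hxin : x \in remaining rhd k by rewrite inE Hx.
apply: le_trans (payment (b0 k) Hxin cX Hmax) _.
apply: bnd_step; first by apply: sumr_ge0.
have -> : ((m - k.+1).+1 = m - k)%N by lia.
exact: IH (ltnW Hk).
Qed.

Lemma telescope (R : realType) (W : nat -> R) (n : nat) :
  (W 0%N ^+ 2 - W n ^+ 2) / 2 <= \sum_(0 <= i < n) W i * (W i - W i.+1).
Proof.
elim: n => [|n IH]; first by rewrite big_geq // subrr mul0r.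
rewrite big_nat_recr //=.
have h : (W 0%N ^+ 2 - W n.+1 ^+ 2) / 2 =
   (W 0%N ^+ 2 - W n ^+ 2) / 2 + ((W n ^+ 2 - W n.+1 ^+ 2) / 2) by field.
rewrite h; apply: lerD => //.
have : 0 <= (W n - W n.+1) ^+ 2 by apply: sqr_ge0.
set a := W n; set b := W n.+1.
have -> : a * (a - b) = (a ^+ 2 - b ^+ 2) / 2 + (a - b) ^+ 2 / 2 by field.
move=> h2; rewrite lerDl; apply: divr_ge0 => //.
Qed.

Unset Implicit Arguments.
Set Strict Implicit.

Theorem mainTheorem5 (R : realType) (m : nat)
  (Rp : {ffun {perm 'I_m} -> R}) (rhd : {perm 'I_m}) :
  is_profile Rp -> PSB_outcome Rp rhd ->
  forall S : {ffun {perm 'I_m} -> R},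
    is_subprofile Rp S -> 0 < mass S ->
    (1 / mass S) * (\sum_s S s * (u_rank s rhd)%:R)
      >= ('C(m, 2))%:R * (mass S / 4) - 3 / 16.
Proof.
move=> Hprof Hpsb S HS HM.
have Hprof' := Hprof; move: Hprof' => [R01 Rsum].
have R0 : forall s, 0 <= Rp s by move=> s; case/andP: (R01 s).
have S0 : forall s, 0 <= S s by move=> s; case/andP: (HS s).
have bb := budget_bounds rhd R0.
have b0 : forall k s, 0 <= budget Rp rhd k s by move=> k s; case/andP: (bb k s).
set C : R := ('C(m, 2%N))%:R.
have EC : ('C(m, 2))%:R = C :> R by [].
have C0 : 0 <= C by rewrite ler0n.
set w := fun s => S s / Rp s.
have w01 : forall s, 0 <= w s <= 1.
  move=> s; rewrite /w; have /andP[h1 h2] := HS s.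
  case: (eqVneq (Rp s) 0) => [->|Rne]; first by rewrite invr0 mulr0 lexx ler01.
  have Rpos : 0 < Rp s by rewrite lt_def Rne R0.
  by rewrite divr_ge0 ?R0 //= ler_pdivrMr // mul1r.
have wR : forall s, w s * Rp s = S s.
  move=> s; rewrite /w; case: (eqVneq (Rp s) 0) => [Req|Rne]; last by rewrite divfK.
  have /andP[_ h2] := HS s; rewrite Req in h2; rewrite Req mulr0; apply/eqP; by rewrite eq_le S0 h2.
have wS : forall k s, w s * budget Rp rhd k s <= S s * C.
  move=> k s; have /andP[h1 _] := w01 s; have /andP[_ h2] := bb k s.
  by rewrite -wR -mulrA ler_wpM2l.
set Wk := fun k => \sum_s w s * budget Rp rhd k s.
set G := fun x => \sum_s S s * (u_cand s x (remaining rhd (rhd x)))%:R.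
set T := \sum_s S s * (u_rank s rhd)%:R.
have ET : T = \sum_x G x.
  rewrite /T /G exchange_big /=; apply: eq_bigr => s _.
  by rewrite urank_split natr_sum mulr_sumr.
have Hstep : forall x : 'I_m, Wk (rhd x) * (Wk (rhd x) - Wk (rhd x).+1) <= 2 * C * G x.
  move=> x; rewrite /Wk /G budget_succ.
  apply: (wdecrease (b0 (rhd x)) w01 (wS (rhd x)) C0 S0).
    by rewrite card_remaining; have := ltn_ord (rhd x); lia.
  by move=> y Hy; apply: Hpsb.
have HT : \sum_(0 <= i < m) Wk i * (Wk i - Wk i.+1) <= 2 * C * T.
  rewrite big_mkord (reindex_inj (@perm_inj _ rhd)) /= ET mulr_sumr.
  by apply: ler_sum => x _; apply: Hstep.
have Htel := telescope Wk m.
have W0 : Wk 0%N = C * mass S.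
  rewrite /Wk /mass mulr_sumr; apply: eq_bigr => s _.
  by rewrite /= ffunE mulrA wR mulrC.
have Wm0 : 0 <= Wk m.
  by apply: sumr_ge0 => s _; rewrite mulr_ge0 //; case/andP: (w01 s).
have Wm1 : Wk m <= 3 / 4.
  apply: le_trans (budget_final Hprof Hpsb); apply: ler_sum => s _.
  by rewrite ler_piMl //; case/andP: (w01 s).
have Wm2 : Wk m <= C * mass S.
  rewrite /Wk /mass mulr_sumr; apply: ler_sum => s _; by rewrite [C * _]mulrC; exact: wS.
have T0 : 0 <= T by apply: sumr_ge0 => s _; rewrite mulr_ge0 ?ler0n.
set M := mass S in HM W0 Wm2 *.
set V := Wk m in Wm0 Wm1 Wm2 Htel.
rewrite W0 in Htel.
have Hmain : (C ^+ 2 * M ^+ 2 - V ^+ 2) / 2 <= 2 * C * T.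
  by apply: le_trans HT; rewrite -exprMn.
case: (eqVneq C 0) => [C0'|Cne].
  rewrite C0' mul0r sub0r; apply: le_trans (_ : 0 <= _).
    lra.
  by rewrite mulr_ge0 // div1r invr_ge0 ltW.
have Cpos : 0 < C by rewrite lt_def Cne C0.
have HV : V ^+ 2 <= 3 / 4 * (C * M).
  rewrite expr2; apply: ler_pM => //.
have HT2 : C * M ^+ 2 / 4 - 3 * M / 16 <= T.
  have h : C * (C * M ^+ 2 / 4 - 3 * M / 16) <= C * T.
    have -> : C * (C * M ^+ 2 / 4 - 3 * M / 16) = (C ^+ 2 * M ^+ 2 - 3 / 4 * (C * M)) / 4 by field.
    lra.
  by rewrite ler_pM2l in h.
rewrite div1r ler_pdivlMl //.
have -> : M * (C * (M / 4) - 3 / 16) = C * M ^+ 2 / 4 - 3 * M / 16 by field.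
exact: HT2.
Qed.
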